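(* Let $H=(V,E)$ be a graph, $t\ge 1$ an integer, and let $E_1,\dots,E_s\subseteq E$ be sets of edges each of size at most $t$, such that for every $1\le i<j\le s$ the graph $(V,E\setminus(E_i\cup E_j))$ is disconnected. If $s>(2^t+1)2^{t-1}$, then $m(H)\le 2^t$.
   Context: All graphs are finite and simple. For graphs $G_1=(V,E_1)$, $G_2=(V,E_2)$ on the same vertex set, their symmetric difference is the graph $(V,E_1\oplus E_2)$, where $E_1\oplus E_2$ is the set of edges belonging to exactly one of $E_1,E_2$. For a graph $H=(V,E)$, a spanning subgraph of $H$ is a graph $(V,E')$ with $E'\subseteq E$. A connectivity code for $H$ is a collection $\mathcal G$ of distinct spanning subgraphs of $H$ such that the symmetric difference of any two distinct members of $\mathcal G$ is a connected graph on the vertex set $V$. $m(H)$ denotes the maximum cardinality of a connectivity code for $H$. *)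

(* Defs.v *)
From mathcomp Require Import all_boot.
Set Implicit Arguments. Unset Strict Implicit. Unset Printing Implicit Defensive.

(* A finite simple graph on vertex set T (a finType) is given by its edge set
   E : {set {set T}}, each edge being a 2-element subset of T. *)
Definition simple_edges (T : finType) (E : {set {set T}}) : Prop :=
  forall e, e \in E -> #|e| = 2.

Definition adj (T : finType) (E : {set {set T}}) : rel T :=
  fun x y => (x != y) && ([set x; y] \in E).

Definition connected_graph (T : finType) (E : {set {set T}}) : Prop :=
  forall x y : T, connect (adj E) x y.

Definition symdiff (T : finType) (E1 E2 : {set {set T}}) : {set {set T}} :=
  (E1 :\: E2) :|: (E2 :\: E1).

Definition conn_code (T : finType) (E : {set {set T}})
    (C : {set {set {set T}}}) : bool :=
  [forall F in C, F \subset E] &&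
  [forall F1 in C, forall F2 in C,
     (F1 != F2) ==> [forall x, forall y, connect (adj (symdiff F1 F2)) x y]].

Definition mcode (T : finType) (E : {set {set T}}) : nat :=
  \max_(C : {set {set {set T}}} | conn_code E C) #|C|.

(* Main.v *)
Require Import Defs.
From mathcomp Require Import all_boot.
Set Implicit Arguments. Unset Strict Implicit. Unset Printing Implicit Defensive.

Lemma arith_e t : 1 <= t -> (2 ^ t).+1 * 2 ^ t = ((2 ^ t + 1) * 2 ^ (t - 1)).*2.
Proof.
case: t => // t _.
by rewrite subn1 /= expnS addn1 -muln2 mulnCA mulnC -mulnA mulnC.
Qed.

Lemma code_small (T : finType) (E : {set {set T}}) (t s : nat)
    (Es : 'I_s -> {set {set T}}) (C : {set {set {set T}}}) :
  1 <= t ->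
  (forall i, #|Es i| <= t) ->
  (forall i j : 'I_s, i < j -> ~ connected_graph (E :\: (Es i :|: Es j))) ->
  (2 ^ t + 1) * 2 ^ (t - 1) < s ->
  conn_code E C -> #|C| <= 2 ^ t.
Proof.
move=> t1 Est Hdis Hs /andP[/forall_inP CE /forall_inP Ccon].
rewrite leqNgt; apply/negP => HC.
have [l [ul sl subl]] : exists l, [/\ uniq l, size l = (2^t).+1 & {subset l <= C}].
  by apply/card_geqP.
pose C' := [set x in l].
have cC' : #|C'| = (2^t).+1 by rewrite cardsE (card_uniqP ul).
have sC' : C' \subset C by apply/subsetP => x; rewrite inE => /subl.
pose cond (i : 'I_s) (P : {set {set {set T}}}) :=
  [&& P \subset C', #|P| == 2 &
     [forall F1 in P, forall F2 in P, F1 :&: Es i == F2 :&: Es i]].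
have ex i : exists P, cond i P.
  have : [exists F1 in C', exists F2 in C', (F1 != F2) && (F1 :&: Es i == F2 :&: Es i)].
    apply: negbNE; apply/negP => /negP Hn.
    have inj : {in C' &, injective (fun F => F :&: Es i)}.
      move=> F1 F2 H1 H2 Heq; apply/eqP; apply: negbNE; apply/negP => Hne; apply: Hn.
      by apply/existsP; exists F1; rewrite H1 /=; apply/existsP; exists F2;
         rewrite H2 Hne Heq eqxx.
    have := card_in_imset inj.
    have : (fun F => F :&: Es i) @: C' \subset powerset (Es i).
      by apply/subsetP => x /imsetP[F _ ->]; rewrite inE subsetIr.
    move=> /subset_leq_card; rewrite card_powerset => h1 h2.
    have : 2 ^ #|Es i| <= 2 ^ t by rewrite leq_exp2l.
    by move: h1; rewrite h2 cC' => h1 h3; have := leq_trans h1 h3; rewrite ltnn.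
  case/exists_inP => F1 H1 /exists_inP [F2 H2 /andP[Hne /eqP Heq]].
  exists [set F1; F2]; apply/and3P; split.
  - by apply/subsetP => x /set2P[] ->.
  - by rewrite cards2 Hne.
  - apply/forall_inP => G1; rewrite !inE => HG1; apply/forall_inP => G2; rewrite !inE => HG2.
    case/orP: HG1 => /eqP ->; case/orP: HG2 => /eqP ->; by rewrite ?Heq.
pose P i := odflt set0 [pick Q | cond i Q].
have PP i : cond i (P i).
  rewrite /P; case: pickP => [Q //|H]; case: (ex i) => Q HQ; by rewrite H in HQ.
have : [exists i, exists j, (i != j) && (P i == P j)].
  apply: negbNE; apply/negP => /negP Hn.
  have inj : injective P.
    move=> i j Heq; apply/eqP; apply: negbNE; apply/negP => Hne; apply: Hn.
    by apply/existsP; exists i; apply/existsP; exists j; rewrite Hne Heq eqxx.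
  have := card_imset [set: 'I_s] inj; rewrite cardsT card_ord => h.
  have : P @: [set: 'I_s] \subset [set A : {set {set {set T}}} | A \subset C' & #|A| == 2].
    apply/subsetP => x /imsetP[i _ ->]; rewrite inE.
    by case/and3P: (PP i) => -> -> _.
  move/subset_leq_card; rewrite cards_draws h cC' bin2 /= => h2.
  have e : (2 ^ t).+1 * 2 ^ t = ((2 ^ t + 1) * 2 ^ (t - 1)).*2.
    exact: arith_e.
  by move: h2; rewrite e doubleK leqNgt Hs.
case/existsP => i /existsP [j /andP[Hne /eqP Heq]].
wlog lt_ij : i j Hne Heq / i < j.
  move=> W; case: (ltngtP i j) => h.
  - exact: W h.
  - by apply: (W j i) => //; rewrite eq_sym.
  - by move: Hne; rewrite (val_inj h) eqxx.
case/and3P: (PP i) => sPi cPi /forall_inP Hi.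
case/and3P: (PP j) => _ _ /forall_inP Hj.
case/cards2P: cPi => F1 [F2 [Hne12 eP]].
have F1i : F1 \in P i by rewrite eP !inE eqxx.
have F2i : F2 \in P i by rewrite eP !inE eqxx orbT.
have F1C : F1 \in C by apply: (subsetP sC'); apply: (subsetP sPi).
have F2C : F2 \in C by apply: (subsetP sC'); apply: (subsetP sPi).
have ei : F1 :&: Es i = F2 :&: Es i by apply/eqP; move/forall_inP: (Hi _ F1i); apply.
have ej : F1 :&: Es j = F2 :&: Es j.
  by apply/eqP; move: F1i F2i; rewrite Heq => F1j F2j; move/forall_inP: (Hj _ F1j); apply.
apply: (Hdis i j lt_ij) => x y.
have := Ccon _ F1C; move/forall_inP/(_ _ F2C); rewrite Hne12 /=.
move/forallP/(_ x)/forallP/(_ y).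
apply: connect_sub => u v /andP[huv hsd]; apply: connect1; rewrite /adj huv /=.
have agree k e : F1 :&: Es k = F2 :&: Es k -> e \in Es k -> (e \in F1) = (e \in F2).
  move=> ek he; have := congr1 (fun S : {set {set T}} => e \in S) ek; by rewrite /= !inE he !andbT.
move: hsd; rewrite /symdiff !inE.
set e := [set u; v].
case/orP => /andP[hn hin].
- rewrite (subsetP (CE _ F1C)) // andbT.
  apply/orP => -[he|he].
  + by move: hn; rewrite -(agree i e ei he) hin.
  + by move: hn; rewrite -(agree j e ej he) hin.
- rewrite (subsetP (CE _ F2C)) // andbT.
  apply/orP => -[he|he].
  + by move: hn; rewrite (agree i e ei he) hin.
  + by move: hn; rewrite (agree j e ej he) hin.
Qed.

Theorem lemma3p1 (T : finType) (E : {set {set T}}) (t s : nat)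
    (Es : 'I_s -> {set {set T}}) :
  simple_edges E ->
  1 <= t ->
  (forall i, Es i \subset E) ->
  (forall i, #|Es i| <= t) ->
  (forall i j : 'I_s, i < j -> ~ connected_graph (E :\: (Es i :|: Es j))) ->
  (2 ^ t + 1) * 2 ^ (t - 1) < s ->
  mcode E <= 2 ^ t.
Proof.
move=> _ t1 _ Est Hdis Hs; rewrite /mcode.
apply/bigmax_leqP => C HC; exact: (code_small t1 Est Hdis Hs HC).
Qed.
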